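(* Let $q$ be a prime power, $k\ge 2$, and let $\mathcal{L}$ be a Cameron-Liebler $k$-set of $\mathrm{AG}(n,q)$ with parameter $x$. Let $0\le i\le k-2$, let $I$ be an $i$-dimensional subspace of $\pi_\infty$, and let $\pi$ be an $(n-i-1)$-dimensional subspace of $\mathrm{PG}(n,q)$ disjoint from $I$. Let $\pi_A=\pi\setminus(\pi\cap\pi_\infty)$, an affine space isomorphic to $\mathrm{AG}(n-i-1,q)$ with hyperplane at infinity $\pi\cap\pi_\infty$, and let $\mathcal{J}=\{K\cap\pi: K\in\mathcal{L},\ I\subseteq K\}$, a set of $(k-i-1)$-spaces of $\pi_A$. If $n\ge 2k-i$ (and $n\ge k+2$), then $\mathcal{J}$ is a Cameron-Liebler $(k-i-1)$-set of $\pi_A$ with parameter $x$.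
   Context: $\mathrm{AG}(n,q)$ is $\mathrm{PG}(n,q)$ with a hyperplane $\pi_\infty$ removed; affine points are points outside $\pi_\infty$, affine $k$-spaces are $k$-dimensional projective subspaces not contained in $\pi_\infty$. For an affine space $\mathrm{AG}(m,q)$ and $1\le j\le m-1$, with $A$ the incidence matrix of its affine points versus affine $j$-spaces, a set $\mathcal{M}$ of affine $j$-spaces is a Cameron-Liebler $j$-set if its characteristic vector lies in the real row space $\mathrm{Im}(A^T)$; its parameter is $|\mathcal{M}|/\left[{m\atop j}\right]_q$, where $\left[{a\atop b}\right]_q=\frac{(q^a-1)\cdots(q^{a-b+1}-1)}{(q^b-1)\cdots(q-1)}$. *)

(* Defs.v *)
(* Projective space PG(n,q) is modelled as the lattice of
   subspaces of F^(n+1) (row vectors), F a finite field with #|F| = q.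
   A projective d-space is a vector subspace of rank d+1, represented by its
   canonical square matrix <<A>>%MS. *)
From HB Require Import structures.
From mathcomp Require Import all_boot all_order all_algebra.
From mathcomp Require Import reals.
Set Implicit Arguments. Unset Strict Implicit. Unset Printing Implicit Defensive.
Import Order.TTheory GRing.Theory Num.Theory.
Local Open Scope ring_scope.

Section Defs.
Variables (R : realType) (F : finFieldType) (n : nat).
Local Notation sub := 'M[F]_n.+1.

Definition is_sub (A : sub) : bool := (<<A>>%MS == A).

(* Affine space given by an ambient projective subspace S with hyperplane
   at infinity H (H a hyperplane of S).
   Affine points: projective points of S not in H. *)
Definition aff_points (S H : sub) : {set sub} :=
  [set P : sub | [&& is_sub P, \rank P == 1%N, (P <= S)%MS & ~~ (P <= H)%MS]].

Definition aff_jspaces (S H : sub) (j : nat) : {set sub} :=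
  [set K : sub | [&& is_sub K, \rank K == j.+1, (K <= S)%MS & ~~ (K <= H)%MS]].

Definition gaussR (a b : nat) : R :=
  (\prod_(0 <= t < b) ((#|F|%:R : R) ^+ (a - t) - 1)) /
  (\prod_(0 <= t < b) ((#|F|%:R : R) ^+ t.+1 - 1)).

(* M is a Cameron-Liebler j-set of the affine space (S,H), of dimension
   m = rank S - 1, with parameter x: M is a set of affine j-spaces whose
   characteristic vector lies in the real row space Im(A^T) of the
   point/j-space incidence matrix A, i.e. chi = A^T v for some real vector v
   indexed by affine points; and x = |M| / [m choose j]_q. *)
Definition CL_set (S H : sub) (j : nat) (M : {set sub}) (x : R) : Prop :=
  [/\ M \subset aff_jspaces S H j,
      exists v : sub -> R, forall K, K \in aff_jspaces S H j ->
        ((K \in M)%:R : R) =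
        \sum_(P in aff_points S H) ((P <= K)%MS%:R : R) * v P
    & x = (#|M|%:R : R) / gaussR (\rank S).-1 j].

Definition Jset (L : {set sub}) (I pi : sub) : {set sub} :=
  [set <<(K :&: pi)%MS>>%MS | K in L & (I <= K)%MS].

End Defs.

(* Main.v *)
Require Import Defs.
From HB Require Import structures.
From mathcomp Require Import all_boot all_order all_algebra.
From mathcomp Require Import reals.
From mathcomp Require Import zify.
Set Implicit Arguments. Unset Strict Implicit. Unset Printing Implicit Defensive.
Import Order.TTheory GRing.Theory Num.Theory.
Local Open Scope ring_scope.

Section Count.
Variables (F : finFieldType) (N : nat).
Local Notation q := #|F|.

Lemma sub_rank_eq m1 m2 (A : 'M[F]_(m1, N)) (B : 'M[F]_(m2, N)) :
  (A <= B)%MS -> (\rank B <= \rank A)%N -> (A :=: B)%MS.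
Proof.
by move=> sAB rBA; apply/eqmxP; rewrite -(mxrank_leqif_eq sAB) eqn_leq rBA mxrankS.
Qed.

Lemma card_subsp m (S : 'M[F]_(m, N)) :
  #|[set v : 'rV[F]_N | (v <= S)%MS]| = (q ^ \rank S)%N.
Proof.
have -> : [set v : 'rV[F]_N | (v <= S)%MS] =
   [set (u *m row_base S)%R | u in [set: 'rV[F]_(\rank S)]].
  apply/setP => v; rewrite inE; apply/idP/imsetP.
    rewrite -(eq_row_base S) => /submxP [u ->]; by exists u; rewrite ?inE.
  by move=> [u _ ->]; apply: (submx_trans (submxMl u _)); rewrite eq_row_base.
rewrite card_imset; last exact: row_free_inj (row_base_free S).
by rewrite cardsT card_mx mul1n.
Qed.

Lemma rank_add_row m (S : 'M[F]_(m, N)) (v : 'rV[F]_N) :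
  \rank (S + v)%MS = (\rank S + ~~ (v <= S)%MS)%N.
Proof.
have := mxrank_sum_cap S v.
have hv := rank_leq_row v.
case: (boolP (v <= S)%MS) => vS /=.
  have e : (S :&: v :=: v)%MS.
    by apply/eqmxP/andP; split; rewrite ?capmxSr // sub_capmx vS submx_refl.
  rewrite e; lia.
have: (\rank (S :&: v) < \rank v)%N.
  rewrite ltn_neqAle mxrankS ?capmxSr // andbT.
  apply: contra vS => /eqP e.
  have := sub_rank_eq (capmxSr S v) (eq_leq (esym e)).
  by move=> e2; rewrite -e2 capmxSl.
lia.
Qed.

Definition Ext (U W : 'M[F]_(N, N)) m :=
  [set X : 'M[F]_(m, N) | (X <= U)%MS && (\rank (W + X)%MS == \rank W + m)%N].

Lemma card_diff (U S : 'M[F]_(N, N)) : (S <= U)%MS ->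
  #|[set v : 'rV[F]_N | (v <= U)%MS && ~~ (v <= S)%MS]| = (q ^ \rank U - q ^ \rank S)%N.
Proof.
move=> sSU.
have -> : [set v : 'rV[F]_N | (v <= U)%MS && ~~ (v <= S)%MS] =
   [set v : 'rV[F]_N | (v <= U)%MS] :\: [set v : 'rV[F]_N | (v <= S)%MS].
  by apply/setP => v; rewrite !inE andbC.
have h : [set v : 'rV[F]_N | (v <= U)%MS] :&: [set v : 'rV[F]_N | (v <= S)%MS] = [set v : 'rV[F]_N | (v <= S)%MS].
  by apply/setP => v; rewrite !inE andb_idl // => /submx_trans; apply.
by rewrite cardsD h !card_subsp.
Qed.

Lemma card_dep (A B : finType) (P : pred B) (Q : B -> pred A) :
  #|[set p : B * A | P p.1 && Q p.1 p.2]| = (\sum_(y | P y) #|[set x | Q y x]|)%N.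
Proof.
rewrite -sum1_card (eq_bigl (fun p : B * A => P p.1 && Q p.1 p.2)); last first.
  by move=> p; rewrite inE.
rewrite -(pair_big_dep P Q (fun _ _ => 1%N)); apply: eq_bigr => y _.
by rewrite -sum1_card; apply: eq_bigl => x; rewrite inE.
Qed.

Lemma ext_col (U W : 'M[F]_(N, N)) m (v : 'rV[F]_N) (X : 'M[F]_(m, N)) :
  ((col_mx v X : 'M_(m.+1, N)) \in Ext U W m.+1) =
  [&& X \in Ext U W m, (v <= U)%MS & ~~ (v <= W + X)%MS].
Proof.
rewrite /Ext !inE -[m.+1]/(1 + m)%N col_mx_sub.
have hc : (col_mx v X :=: v + X)%MS := eqmx_sym (addsmxE v X).
have e : (W + col_mx v X :=: (W + X) + v)%MS.
  apply/eqmxP/andP; split.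
    rewrite addsmx_sub col_mx_sub addsmxSr.
    rewrite (submx_trans (addsmxSl W X) (addsmxSl _ _)).
    by rewrite (submx_trans (addsmxSr W X) (addsmxSl _ _)).
  have h1 : (col_mx v X <= W + col_mx v X)%MS by apply: addsmxSr.
  rewrite !addsmx_sub addsmxSl /=.
  have hv : (v <= col_mx v X)%MS by rewrite hc addsmxSl.
  have hX : (X <= col_mx v X)%MS by rewrite hc addsmxSr.
  by rewrite (submx_trans hv h1) (submx_trans hX h1).
rewrite e rank_add_row.
have h2 := (mxrank_adds_leqif W X).1.
have h3 := rank_leq_row X.
have h4 : (\rank (W + X) <= \rank W + m)%N by lia.
case: (v <= W + X)%MS; case: (v <= U)%MS; case: (X <= U)%MS => /=; lia.
Qed.

Lemma count_ext (U W : 'M[F]_(N, N)) m : (W <= U)%MS ->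
  #|Ext U W m| = (\prod_(0 <= t < m) (q ^ \rank U - q ^ (\rank W + t)))%N.
Proof.
move=> sWU; elim: m => [|m IH].
  rewrite big_nil; apply/eqP; rewrite eqn_leq; apply/andP; split.
    by apply: leq_trans (max_card _) _; rewrite card_mx.
  rewrite card_gt0; apply/set0Pn; exists 0%R; rewrite inE sub0mx addn0 /=.
  by rewrite addsmx0.
rewrite big_nat_recr //= -IH.
have -> : Ext U W m.+1 = [set (@col_mx _ 1 m N p.2 p.1 : 'M_(m.+1, N)) | p in
     [set p : 'M[F]_(m, N) * 'rV[F]_N | (p.1 \in Ext U W m) && ((p.2 <= U)%MS && ~~ (p.2 <= W + p.1)%MS)]].
  apply/setP => Y; apply/idP/imsetP.
    have e := @vsubmxK _ 1 m N Y.
    move=> HY; move: HY; rewrite -e ext_col => /and3P [h1 h2 h3].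
    by exists (dsubmx (Y : 'M_(1 + m, N)), usubmx (Y : 'M_(1 + m, N))); rewrite ?e // inE /= h1 h2 h3.
  by move=> [p]; rewrite inE => /andP [h1 /andP [h2 h3]] ->; rewrite ext_col h1 h2 h3.
rewrite card_imset; last first.
  by move=> [a b] [c d] /= e; case: (@eq_col_mx _ 1 m N b a d c e) => -> ->.
rewrite (card_dep (fun X : 'M[F]_(m, N) => X \in Ext U W m) (fun X (v : 'rV[F]_N) => (v <= U)%MS && ~~ (v <= W + X)%MS)).
rewrite (eq_bigr (fun _ => q ^ \rank U - q ^ (\rank W + m))%N).
  by rewrite sum_nat_const mulnC.
move=> X; rewrite /Ext inE => /andP [hXU /eqP hr].
by rewrite card_diff ?hr // addsmx_sub (submx_trans sWU) ?hXU.
Qed.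
End Count.

Section Count2.
Variables (F : finFieldType) (n : nat).
Local Notation q := #|F|.
Local Notation sub := 'M[F]_n.+1.

Definition Ks (W : sub) (e : nat) :=
  [set K : sub | [&& is_sub K, \rank K == e & (W <= K)%MS]].

Lemma is_subE (K : sub) : is_sub K -> <<K>>%MS = K.
Proof. by move/eqP. Qed.

Lemma count_super (W : sub) m :
  (#|Ks W (\rank W + m)| * \prod_(0 <= t < m) (q ^ (\rank W + m) - q ^ (\rank W + t)) =
   \prod_(0 <= t < m) (q ^ n.+1 - q ^ (\rank W + t)))%N.
Proof.
have E1 := @count_ext F n.+1 1%:M W m (submx1 W); rewrite mxrank1 in E1.
rewrite -E1.
have -> : #|Ext 1%:M W m| = (\sum_(K in Ks W (\rank W + m)) #|Ext K W m|)%N.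
  rewrite -sum1_card big_mkcond /=.
  rewrite (eq_bigr (fun X => \sum_(K in Ks W (\rank W + m)) (if X \in Ext K W m then 1 else 0))%N).
    rewrite [RHS](eq_bigr (fun K => \sum_X (if X \in Ext K W m then 1 else 0))%N).
      exact: exchange_big.
    by move=> K _; rewrite -sum1_card big_mkcond.
  move=> X _.
  case: (boolP (X \in Ext 1%:M W m)) => hX.
    have hX' := hX; rewrite /Ext inE submx1 /= in hX'.
    have K0in : <<(W + X)%MS>>%MS \in Ks W (\rank W + m).
      by rewrite /Ks inE /is_sub genmx_id eqxx /= genmxE hX' /= genmxE addsmxSl.
    rewrite (bigD1 _ K0in) /= big1.
      by rewrite /Ext inE genmxE addsmxSr hX'.
    move=> K /andP [hK hKK0].
    case: ifP => // hXK; exfalso; move: hKK0; apply/negP; rewrite negbK.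
    have hK' : K \in Ks W (\rank W + m) by [].
    move: hK' hXK; rewrite /Ks /Ext !inE => /and3P [sK /eqP rK WK] /andP [XK /eqP rWX].
    apply/eqP; rewrite -(is_subE sK); apply: eq_genmx; apply: eqmx_sym.
    by apply: sub_rank_eq; rewrite ?addsmx_sub ?WK ?XK // rK rWX.
  rewrite big1 // => K _; case: ifP => // hXK; exfalso; move: hX; apply/negP; rewrite negbK.
  by move: hXK; rewrite /Ext !inE submx1 => /andP [].
rewrite [RHS](eq_bigr (fun _ => \prod_(0 <= t < m) (q ^ (\rank W + m) - q ^ (\rank W + t))))%N.
  by rewrite sum_nat_const.
move=> K; rewrite /Ks inE => /and3P [_ /eqP rK WK].
by rewrite count_ext // rK.
Qed.

End Count2.

Section Count3.
Variables (R : realType) (F : finFieldType) (n : nat).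
Local Notation q := #|F|.
Local Notation sub := 'M[F]_n.+1.

Lemma q_gt1 : (1 < q)%N.
Proof. exact: card_finNzRing_gt1. Qed.

Lemma qpow_sub1_neq0 a : (0 < a)%N -> ((q%:R : R) ^+ a - 1) != 0.
Proof.
move=> a0; rewrite subr_eq0 -natrX pnatr_eq1.
by rewrite -(expn0 q) eqn_exp2l ?q_gt1 // -lt0n.
Qed.

Lemma natr_pow_diff a b : (a <= b)%N ->
  (((q ^ b - q ^ a)%N)%:R : R) = (q%:R : R) ^+ a * ((q%:R : R) ^+ (b - a) - 1).
Proof.
move=> ab; rewrite natrB ?leq_pexp2l // ?(ltnW q_gt1) //.
by rewrite !natrX mulrBr mulr1 -exprD subnKC.
Qed.

Lemma gauss_count (W : sub) m : (\rank W + m <= n.+1)%N ->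
  (#|Ks W (\rank W + m)|%:R : R) = gaussR R F (n.+1 - \rank W) m.
Proof.
move=> hm; set w := \rank W.
have := count_super W m; move/(congr1 (fun x : nat => (x%:R : R))).
rewrite natrM !natr_prod.
rewrite (eq_big_nat _ _ (F2 := fun t => (q%:R : R) ^+ (w + t) * ((q%:R : R) ^+ (m - t) - 1))); last first.
  move=> t /andP [_ ht]; rewrite natr_pow_diff; last by lia.
  by congr (_ * (_ ^+ _ - 1)); lia.
rewrite [RHS](eq_big_nat _ _ (F2 := fun t => (q%:R : R) ^+ (w + t) * ((q%:R : R) ^+ (n.+1 - w - t) - 1))); last first.
  move=> t /andP [_ ht]; rewrite natr_pow_diff; last by lia.
  by congr (_ * (_ ^+ _ - 1)); lia.
rewrite !big_split /=.
have P0 : \prod_(0 <= t < m) (q%:R : R) ^+ (w + t) != 0.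
  rewrite prodf_seq_neq0; apply/allP => t _ /=; rewrite expf_neq0 // pnatr_eq0 -lt0n.
  by apply: ltnW; apply: q_gt1.
have B0 : \prod_(0 <= t < m) ((q%:R : R) ^+ t.+1 - 1) != 0.
  by rewrite prodf_seq_neq0; apply/allP => t _ /=; rewrite qpow_sub1_neq0.
have Brev : \prod_(0 <= t < m) ((q%:R : R) ^+ (m - t) - 1) = \prod_(0 <= t < m) ((q%:R : R) ^+ t.+1 - 1).
  rewrite big_nat_rev /= add0n; apply: eq_big_nat => t /andP [_ ht].
  by congr (_ ^+ _ - 1); lia.
rewrite Brev mulrCA => /(mulfI P0) e.
by rewrite /gaussR -e mulfK.
Qed.

End Count3.

Section Geo.
Variables (F : finFieldType) (n i : nat) (Hinf I pi : 'M[F]_n.+1).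
Local Notation sub := 'M[F]_n.+1.
Hypotheses (hI : \rank I = i.+1) (hIH : (I <= Hinf)%MS) (hpi : \rank pi = (n - i)%N)
  (hIpi : \rank (I :&: pi)%MS = 0%N) (hin : (i <= n)%N).

Lemma full_Ipi : \rank (I + pi)%MS = n.+1.
Proof. have := mxrank_sum_cap I pi; rewrite hI hpi hIpi; lia. Qed.

Lemma rank_cap_pi (A : sub) : (I <= A)%MS -> (\rank (A :&: pi)%MS + i.+1)%N = \rank A.
Proof.
move=> IA.
have h1 : \rank (A + pi)%MS = n.+1.
  apply/eqP; rewrite eqn_leq rank_leq_col -{1}full_Ipi mxrankS //.
  by rewrite addsmxS.
have := mxrank_sum_cap A pi; rewrite h1 hpi; lia.
Qed.

Lemma I_cap_pi (A : sub) : (I <= A)%MS -> (I + (A :&: pi) :=: A)%MS.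
Proof.
move=> IA; apply: sub_rank_eq; first by rewrite addsmx_sub IA capmxSl.
have := mxrank_sum_cap I (A :&: pi)%MS.
have : (\rank (I :&: (A :&: pi)) <= \rank (I :&: pi)%MS)%N.
  by apply: mxrankS; apply: capmxS; rewrite ?submx_refl ?capmxSr.
have := rank_cap_pi IA; rewrite hIpi hI; lia.
Qed.

Lemma rank_I_add (B : sub) : (B <= pi)%MS -> \rank (I + B)%MS = (i.+1 + \rank B)%N.
Proof.
move=> Bpi; have := mxrank_sum_cap I B.
have : (\rank (I :&: B) <= \rank (I :&: pi)%MS)%N.
  by apply: mxrankS; apply: capmxS; rewrite ?submx_refl.
rewrite hIpi hI; lia.
Qed.

Lemma cap_I_add (B : sub) : (B <= pi)%MS -> ((I + B) :&: pi :=: B)%MS.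
Proof.
move=> Bpi; apply: eqmx_sym; apply: sub_rank_eq.
  by rewrite sub_capmx addsmxSr Bpi.
have := rank_cap_pi (addsmxSl I B); rewrite rank_I_add //; lia.
Qed.

Lemma rank_I_pt (P : sub) : \rank P = 1%N -> ~~ (P <= Hinf)%MS -> \rank (I + P)%MS = i.+2.
Proof.
move=> rP PH; have := mxrank_sum_cap I P.
have : \rank (I :&: P)%MS = 0%N.
  have := mxrankS (capmxSr I P); rewrite rP.
  case: (ltngtP (\rank (I :&: P)) 1) => //; first by lia.
  move=> e _; exfalso; move: PH; apply/negP; rewrite negbK.
  have e2 := sub_rank_eq (capmxSr I P) (eq_leq (etrans rP (esym e))).
  by rewrite -e2 (submx_trans (capmxSl I P)).
rewrite hI rP => ->; lia.
Qed.

End Geo.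

Lemma sum_card_cond (R : realType) (T : finType) (A : {pred T}) (b : pred T) (S : {set T}) :
  (forall x, (x \in S) = (x \in A) && b x) -> (\sum_(x in A) ((b x)%:R : R)) = #|S|%:R.
Proof.
move=> H; rewrite -sum1_card natr_sum big_mkcond [RHS]big_mkcond.
by apply: eq_bigr => x _; rewrite H; case: (x \in A); case: (b x).
Qed.

Section Main.
Variables (R : realType) (F : finFieldType) (n k i : nat) (Hinf I pi : 'M[F]_n.+1)
  (L : {set 'M[F]_n.+1}) (v : 'M[F]_n.+1 -> R).
Local Notation sub := 'M[F]_n.+1.
Hypotheses (hik : (i + 2 <= k)%N) (hkn : (k + 2 <= n)%N)
  (hI : \rank I = i.+1) (hIH : (I <= Hinf)%MS) (hpi : \rank pi = (n - i)%N)
  (hIpi : \rank (I :&: pi)%MS = 0%N)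
  (hLsub : L \subset aff_jspaces 1%:M Hinf k)
  (hv : forall K, K \in aff_jspaces 1%:M Hinf k ->
        ((K \in L)%:R : R) = \sum_(P in aff_points 1%:M Hinf) ((P <= K)%MS%:R) * v P).

Let hin : (i <= n)%N. Proof. lia. Qed.
Let rcp := rank_cap_pi hI hIH hpi hIpi hin.
Let icp := I_cap_pi hI hIH hpi hIpi hin.
Let ria := rank_I_add hI hIH hpi hIpi hin.
Let cia := cap_I_add hI hIH hpi hIpi hin.
Let rip := rank_I_pt hI hIH hpi hIpi hin.

Local Notation AK := (aff_jspaces (1%:M : sub) Hinf k).
Local Notation AP := (aff_points (1%:M : sub) Hinf).
Local Notation AQ := (aff_points pi (pi :&: Hinf)%MS).
Local Notation AM := (aff_jspaces pi (pi :&: Hinf)%MS (k - i - 1)).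

Lemma L_is_sub K : K \in L -> is_sub K.
Proof. by move=> /(subsetP hLsub); rewrite inE => /and4P []. Qed.

Lemma J_sub : Jset L I pi \subset AM.
Proof.
apply/subsetP => M /imsetP [K]; rewrite inE => /andP [KL IK] ->.
have := subsetP hLsub K KL; rewrite inE => /and4P [sK /eqP rK _ KH].
rewrite inE /is_sub genmx_id eqxx /= !genmxE capmxSr /=.
apply/andP; split.
  by have := rcp IK; rewrite rK => e; apply/eqP; lia.
apply: contra KH => h.
by rewrite -(icp IK) addsmx_sub hIH (submx_trans h (capmxSr _ _)).
Qed.

Lemma J_card : #|Jset L I pi| = #|[set K in L | (I <= K)%MS]|.
Proof.
rewrite /Jset card_in_imset; first by apply: eq_card => K; rewrite !inE.
move=> K1 K2; rewrite !inE => /andP [K1L IK1] /andP [K2L IK2] e.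
rewrite -(is_subE (L_is_sub K1L)) -(is_subE (L_is_sub K2L)); apply: eq_genmx.
have e' : (K1 :&: pi :=: K2 :&: pi)%MS.
  apply: eqmx_trans (eqmx_sym (genmxE _)) _; rewrite e; exact: genmxE.
apply: eqmx_trans (eqmx_sym (icp IK1)) _.
apply: eqmx_trans _ (icp IK2).
exact: adds_eqmx (eqmx_refl I) e'.
Qed.

Lemma sum_L (W : sub) : (W <= Hinf)%MS ->
  (#|[set K in L | (W <= K)%MS]|%:R : R) =
  \sum_(P in AP) v P * (#|Ks (W + P)%MS k.+1|%:R).
Proof.
move=> WH.
rewrite -(@sum_card_cond R _ AK (fun K => (K \in L) && (W <= K)%MS)); last first.
  move=> K; rewrite [in LHS]inE; case: (boolP (K \in L)) => KL; last by rewrite andbF.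
  by rewrite (subsetP hLsub K KL).
rewrite (eq_bigr (fun K => \sum_(P in AP) ((W <= K)%MS%:R * (P <= K)%MS%:R) * v P)); last first.
  move=> K KA; rewrite andbC -mulnb natrM hv // mulr_sumr; apply: eq_bigr => P _.
  by rewrite mulrA.
rewrite exchange_big /=; apply: eq_bigr => P PA.
rewrite -mulr_suml mulrC; congr (_ * _).
under eq_bigr => K _ do rewrite -natrM mulnb.
apply: sum_card_cond => K; rewrite /Ks !inE.
move: PA; rewrite inE => /and4P [_ _ _ PH].
rewrite addsmx_sub submx1 /=.
case: (boolP (W <= K)%MS) => WK; last by rewrite !andbF.
case: (boolP (P <= K)%MS) => PK; last by rewrite !andbF.
rewrite !andbT /=; case: (is_sub K) => //=; case: (\rank K == k.+1) => //=.
by apply/esym; apply: contra PH => KH; apply: submx_trans PK KH.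
Qed.

Lemma AK_IM M : M \in AM -> <<(I + M)%MS>>%MS \in AK.
Proof.
rewrite !inE => /and4P [sM /eqP rM Mpi MH].
rewrite /is_sub genmx_id eqxx /= !genmxE submx1 ria // rM /=.
apply/andP; split; first by apply/eqP; lia.
apply: contra MH => h; rewrite sub_capmx Mpi /=.
exact: submx_trans (addsmxSr I M) h.
Qed.

Lemma J_mem M : M \in AM -> (M \in Jset L I pi) = (<<(I + M)%MS>>%MS \in L).
Proof.
move=> MA; have := MA; rewrite inE => /and4P [sM /eqP rM Mpi MH].
apply/imsetP/idP.
  move=> [K]; rewrite inE => /andP [KL IK] eM.
  suff -> : <<(I + M)%MS>>%MS = K by [].
  rewrite -[RHS](is_subE (L_is_sub KL)); apply: eq_genmx.
  rewrite eM; apply: eqmx_trans _ (icp IK).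
  exact: adds_eqmx (eqmx_refl I) (genmxE _).
move=> hL; exists <<(I + M)%MS>>%MS; first by rewrite inE hL /= genmxE addsmxSl.
rewrite -[LHS](is_subE sM); apply: eq_genmx; apply: eqmx_sym.
apply: eqmx_trans _ (cia Mpi).
exact: cap_eqmx (genmxE _) (eqmx_refl pi).
Qed.

Lemma inner_sum M P : M \in AM -> P \in AP ->
  \sum_(Q in AQ) (((Q <= M)%MS && (P <= I + Q)%MS)%:R : R) = ((P <= I + M)%MS)%:R.
Proof.
move=> MA PA; have := MA; rewrite inE => /and4P [sM /eqP rM Mpi MH].
move: PA; rewrite inE => /and4P [sP /eqP rP _ PH].
have rIP := rip rP PH.
have MIM : ((I + M) :&: pi :=: M)%MS := cia Mpi.
case: (boolP (P <= I + M)%MS) => hPM; last first.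
  rewrite big1 // => Q _; case: (boolP (Q <= M)%MS) => //= QM.
  case: (boolP (P <= I + Q)%MS) => //= PQ; exfalso; move: hPM; apply/negP; rewrite negbK.
  by apply: submx_trans PQ _; apply: addsmxS; rewrite ?submx_refl.
set Q0 := <<((I + P) :&: pi)%MS>>%MS.
have rQ0 : \rank ((I + P) :&: pi)%MS = 1%N.
  by have := rcp (addsmxSl I P); rewrite rIP; lia.
have eIQ0 : (I + ((I + P) :&: pi) :=: I + P)%MS := icp (addsmxSl I P).
have Q0in : Q0 \in AQ.
  rewrite inE /is_sub /Q0 genmx_id eqxx /= !genmxE rQ0 capmxSr /=.
  apply: contra PH => h.
  have h2 : (I + ((I + P) :&: pi) <= Hinf)%MS.
    by rewrite addsmx_sub hIH (submx_trans h (capmxSr _ _)).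
  by move: h2; rewrite eIQ0 addsmx_sub => /andP [].
rewrite (bigD1 Q0 Q0in) /= big1.
  have -> : (Q0 <= M)%MS.
    rewrite /Q0 genmxE -MIM; apply: capmxS; rewrite ?submx_refl //.
    by rewrite addsmx_sub addsmxSl hPM.
  have -> : (P <= I + Q0)%MS.
    have e : (I + Q0 :=: I + P)%MS.
      apply: eqmx_trans _ eIQ0; exact: adds_eqmx (eqmx_refl I) (genmxE _).
    by rewrite e addsmxSr.
  by rewrite addr0.
move=> Q /andP [QA QQ0]; case: (boolP (Q <= M)%MS) => //= QM.
case: (boolP (P <= I + Q)%MS) => //= PQ; exfalso; move: QQ0; apply/negP; rewrite negbK.
have QA' : Q \in AQ by [].
move: QA'; rewrite inE => /and4P [sQ /eqP rQ Qpi _].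
have e1 : (I + P :=: I + Q)%MS.
  apply: sub_rank_eq; first by rewrite addsmx_sub addsmxSl PQ.
  by rewrite (ria Qpi) rQ addn1 rIP.
have e2 : (Q :=: (I + P) :&: pi)%MS.
  apply: sub_rank_eq; last by rewrite rQ0 rQ.
  by rewrite sub_capmx Qpi andbT e1 addsmxSr.
by apply/eqP; rewrite -(is_subE sQ) /Q0; apply: eq_genmx.
Qed.

End Main.

Lemma gauss_neq0 (R : realType) (F : finFieldType) a b : (b <= a)%N -> gaussR R F a b != 0.
Proof.
move=> ba; rewrite /gaussR mulf_neq0 // ?invr_eq0; rewrite prodf_seq_neq0; apply/allP => t.
  by rewrite mem_index_iota => /andP [_ tb] /=; apply: qpow_sub1_neq0; rewrite subn_gt0; apply: leq_trans tb ba.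
by move=> _ /=; apply: qpow_sub1_neq0.
Qed.

Unset Implicit Arguments.
Theorem theorem6p13 (R : realType) (F : finFieldType) (n k i : nat)
  (Hinf I pi : 'M[F]_n.+1) (L : {set 'M[F]_n.+1}) (x : R) :
  (2 <= k)%N -> (i <= k - 2)%N -> (2 * k - i <= n)%N -> (k + 2 <= n)%N ->
  \rank Hinf = n ->
  CL_set (1%:M : 'M[F]_n.+1) Hinf k L x ->
  \rank I = i.+1 -> (I <= Hinf)%MS ->
  \rank pi = (n - i)%N -> \rank (I :&: pi)%MS = 0%N ->
  CL_set pi (pi :&: Hinf)%MS (k - i - 1) (Jset L I pi) x.
Proof.
move=> hk hik0 _ hkn _ [hLsub [v hv] hx] hI hIH hpi hIpi.
have hik : (i + 2 <= k)%N by clear -hk hik0; lia.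
have hin : (i <= n)%N by clear -hik hkn; lia.
have e1 : (n.+1 - i.+2)%N = (n - i).-1 by clear -hin hik hkn; lia.
have e2 : (k.+1 - i.+2)%N = (k - i - 1)%N by clear -hik; lia.
have e3 : (i.+2 + (k - i - 1))%N = k.+1 by clear -hik; lia.
have hkn' : (k <= n)%N by clear -hkn; lia.
have hkin : (k - i - 1 <= (n - i).-1)%N by clear -hkn hik; lia.
pose s := \sum_(P in aff_points (1%:M : 'M[F]_n.+1) Hinf) v P.
have cL : (#|L|%:R : R) = s * gaussR R F n k.
  have -> : L = [set K in L | ((0 : 'M[F]_n.+1) <= K)%MS].
    by apply/setP => K; rewrite inE sub0mx andbT.
  rewrite (sum_L hLsub hv (sub0mx _ _)) /s mulr_suml; apply: eq_bigr => P PA.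
  move: PA; rewrite inE => /and4P [_ /eqP rP _ _].
  have r0 : \rank ((0%R : 'M[F]_n.+1) + P)%MS = 1%N by rewrite adds0mx rP.
  have -> : k.+1 = (\rank ((0%R : 'M[F]_n.+1) + P)%MS + k)%N by rewrite r0.
  rewrite gauss_count; last by rewrite r0 add1n ltnS.
  by rewrite r0 subn1.
have cJ : (#|Jset L I pi|%:R : R) = s * gaussR R F (n - i).-1 (k - i - 1).
  rewrite (J_card hik hkn hI hIH hpi hIpi hLsub) (sum_L hLsub hv hIH) /s mulr_suml.
  apply: eq_bigr => P PA.
  move: PA; rewrite inE => /and4P [_ /eqP rP _ PH].
  have rIP := rank_I_pt hI hIH hpi hIpi hin rP PH.
  have -> : k.+1 = (\rank (I + P)%MS + (k - i - 1))%N by rewrite rIP e3.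
  rewrite gauss_count; last by rewrite rIP e3.
  by rewrite rIP e1.
have g1 := gauss_neq0 R F hkn'.
have g2 := gauss_neq0 R F hkin.
rewrite mxrank1 /= cL mulfK // in hx.
split.
- exact: (J_sub hik hkn hI hIH hpi hIpi hLsub).
- exists (fun Q => \sum_(P in aff_points (1%:M : 'M[F]_n.+1) Hinf) ((P <= I + Q)%MS%:R) * v P).
  move=> M MA.
  rewrite (J_mem hik hkn hI hIH hpi hIpi hLsub) // hv; last exact: (AK_IM hik hkn hI hIH hpi hIpi hLsub MA).
  under eq_bigr => P _ do rewrite genmxE.
  rewrite [RHS](eq_bigr (fun Q => \sum_(P in aff_points (1%:M : 'M[F]_n.+1) Hinf)
       (((Q <= M)%MS && (P <= I + Q)%MS)%:R * v P))); last first.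
    move=> Q _; rewrite mulr_sumr; apply: eq_bigr => P _.
    by rewrite mulrA -natrM mulnb.
  rewrite [RHS]exchange_big /=; apply: eq_bigr => P PA.
  by rewrite -mulr_suml (inner_sum R hik hkn hI hIH hpi hIpi hLsub).
- by rewrite hpi cJ mulfK.
Qed.
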